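(* Let $n\ge2$, $\boldsymbol{\lambda}=(\lambda_1,\dots,\lambda_n)$ a vector of positive integers, $\ell=\mathrm{lcm}(\lambda_1,\dots,\lambda_{n-1})$ and $\boldsymbol{\lambda}'=(\lambda_1,\dots,\lambda_{n-1},\lambda_n+\ell)$. Let $(a_1,\dots,a_n,d)$ be a minimal generator of $M(\boldsymbol{\lambda})$ of type (4), and let $a_n'$ be the smallest integer such that $\frac{a_1}{\lambda_1}+\cdots+\frac{a_{n-1}}{\lambda_{n-1}}+\frac{a_n'}{\lambda_n+\ell}\ge d$. Then $a_n'=a_n+d\ell-\frac{\ell}{\lambda_1}a_1-\cdots-\frac{\ell}{\lambda_{n-1}}a_{n-1}$, and $(a_1,\dots,a_{n-1},a_n',d)$ is a minimal generator of $M(\boldsymbol{\lambda}')$ of type (4).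
   Context: For a vector $\boldsymbol{\mu}$ of $n$ positive integers, $M(\boldsymbol{\mu})=\{(a_1,\dots,a_n,d)\in\mathbb{N}^{n+1}\mid a_1/\mu_1+\cdots+a_n/\mu_n\ge d\}$. A minimal generator of $M(\boldsymbol{\mu})$ is a nonzero element that cannot be written as the sum of two nonzero elements of $M(\boldsymbol{\mu})$. A minimal generator $(a_1,\dots,a_n,d)$ is of type (4) if $d>0$ and $a_ia_n>0$ for some $1\le i<n$. *)

(* Defs.v *)
From mathcomp Require Import all_boot all_order all_algebra.
Set Implicit Arguments. Unset Strict Implicit. Unset Printing Implicit Defensive.
Import Order.TTheory GRing.Theory Num.Theory.
Local Open Scope ring_scope.

(* Vectors of length n are encoded as functions nat -> nat; only the values
   at indices 0..n-1 are relevant (index i here = index i+1 in the paper). *)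

Definition inM (n : nat) (mu : nat -> nat) (a : nat -> nat) (d : nat) : Prop :=
  (d%:R : rat) <= \sum_(i < n) ((a i)%:R / (mu i)%:R).

Definition nonzeroV (n : nat) (a : nat -> nat) (d : nat) : Prop :=
  (exists i, (i < n)%N /\ a i <> 0%N) \/ d <> 0%N.

Definition min_gen (n : nat) (mu : nat -> nat) (a : nat -> nat) (d : nat) : Prop :=
  [/\ inM n mu a d, nonzeroV n a d &
    forall (b : nat -> nat) (c : nat) (e : nat -> nat) (f : nat),
      inM n mu b c -> inM n mu e f -> nonzeroV n b c -> nonzeroV n e f ->
      ~ ((forall i, (i < n)%N -> a i = (b i + e i)%N) /\ d = (c + f)%N)].

Definition type4 (n : nat) (a : nat -> nat) (d : nat) : Prop :=
  (0 < d)%N /\ exists i, (i < n.-1)%N /\ (0 < a i * a n.-1)%N.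

Definition lcm_init (n : nat) (lam : nat -> nat) : nat :=
  \big[lcmn/1%N]_(i < n.-1) lam i.

Definition lam_shift (n : nat) (lam : nat -> nat) : nat -> nat :=
  fun i => if i == n.-1 then (lam i + lcm_init n lam)%N else lam i.

(* Main.v *)
Require Import Defs.
From mathcomp Require Import all_boot all_order all_algebra zify ring lra.
Import Order.TTheory GRing.Theory Num.Theory.
Local Open Scope ring_scope.

Lemma L_gt0 N (lam : nat -> nat) : (forall i, (i < N)%N -> (0 < lam i)%N) ->
  (0 < lcm_init N.+1 lam)%N.
Proof.
move=> H; rewrite /lcm_init /=.
elim/big_rec: _ => // i x _ Hx; rewrite lcmn_gt0 Hx andbT; exact: H.
Qed.

Lemma L_dvd N (lam : nat -> nat) i : (i < N)%N -> (lam i %| lcm_init N.+1 lam)%N.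
Proof.
move=> Hi; rewrite /lcm_init /=.
exact: (@biglcmn_sup _ (Ordinal Hi)).
Qed.

Lemma sum_T N (lam b : nat -> nat) : (forall i, (i < N)%N -> (0 < lam i)%N) ->
  \sum_(i < N) ((b i)%:R / (lam i)%:R : rat) =
  (\sum_(i < N) (b i * (lcm_init N.+1 lam %/ lam i))%N)%:R / (lcm_init N.+1 lam)%:R.
Proof.
move=> H; rewrite natr_sum mulr_suml; apply: eq_bigr => i _.
have Hl := H i (ltn_ord i). have HL := @L_gt0 N lam H.
have Hd := @L_dvd N lam i (ltn_ord i).
have Hq : (0 < lcm_init N.+1 lam %/ lam i)%N by rewrite divn_gt0 // dvdn_leq.
have E : (lcm_init N.+1 lam = (lcm_init N.+1 lam %/ lam i) * lam i)%N by rewrite divnK.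
move: Hq E. set q := (_ %/ _)%N. move=> Hq E.
rewrite [in RHS]E natrM natrM; field.
by rewrite !pnatr_eq0 -!lt0n Hl Hq.
Qed.

Lemma core N (lam b : nat -> nat) (c : nat) (z : int) (q : nat) :
  (forall i, (i < N)%N -> (0 < lam i)%N) -> (0 < q)%N ->
  ((c%:R : rat) <= \sum_(i < N) ((b i)%:R / (lam i)%:R) + z%:~R / q%:R) <->
  ((c * lcm_init N.+1 lam * q)%N%:Z <=
     ((\sum_(i < N) (b i * (lcm_init N.+1 lam %/ lam i))%N) * q)%N%:Z
     + z * (lcm_init N.+1 lam)%:Z).
Proof.
move=> H Hq; rewrite sum_T //.
set L := lcm_init N.+1 lam. set T := (\sum_(i < N) _)%N.
have HL : (0 < L)%N by exact: (@L_gt0 N lam H).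
have E : T%:R / L%:R + z%:~R / q%:R - (c%:R : rat) =
   ((T * q)%N%:Z + z * L%:Z - (c * L * q)%N%:Z)%:~R / (L * q)%N%:R.
  rewrite intrB intrD intrM /= !natrM; field.
  by rewrite !pnatr_eq0 -!lt0n HL Hq.
rewrite -subr_ge0 E pmulr_lge0; last by rewrite invr_gt0 ltr0n muln_gt0 HL Hq.
rewrite -[0]/((0:int)%:~R) ler_int. split; lia.
Qed.

Lemma inM_iff N mu (lam b : nat -> nat) c :
  (forall i, (i < N)%N -> mu i = lam i) ->
  (forall i, (i < N)%N -> (0 < lam i)%N) -> (0 < mu N)%N ->
  inM N.+1 mu b c <->
  (c * lcm_init N.+1 lam * mu N <=
     (\sum_(i < N) (b i * (lcm_init N.+1 lam %/ lam i))%N) * mu N + b N * lcm_init N.+1 lam)%N.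
Proof.
move=> Hmu H Hq; rewrite /inM big_ord_recr /=.
rewrite (eq_bigr (fun i : 'I_N => (b i)%:R / (lam i)%:R)); last first.
  by move=> i _; rewrite Hmu.
apply: (iff_trans (@core N lam b c (b N)%:Z (mu N) H Hq)). by rewrite -PoszM -PoszD lez_nat.
Qed.
Import Order.TTheory GRing.Theory Num.Theory.
Local Open Scope ring_scope.
Definition Ts N L (lam b : nat -> nat) := (\sum_(i < N) (b i * (L %/ lam i)))%N.
Lemma TsE N L lam b b' : (forall i, (i < N)%N -> b i = b' i) -> Ts N L lam b = Ts N L lam b'.
Proof. by move=> H; apply: eq_bigr => i _; rewrite H. Qed.
Lemma A1 d L p T aN : (d*L* p <= T* p + aN*L -> T < d*L ->
  d*L*(p+L) <= T*(p+L) + (aN + d*L - T)*L)%N.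
Proof.
move=> H1 H2. have E : (aN + d*L - T = aN + (d*L - T))%N by lia.
rewrite E mulnDl mulnBl !mulnDr.
have : (T * L <= d*L*L)%N by rewrite leq_mul2r ltnW ?orbT.
lia.
Qed.
Lemma A2 c L p Tb bN : (c*L*(p+L) <= Tb*(p+L) + bN*L -> Tb < c*L -> 0 < L ->
  c*L <= bN + Tb)%N.
Proof.
move=> H1 H2 HL.
have E : ((c*L - Tb)*(p+L) <= bN * L)%N.
  rewrite mulnBl. lia.
have : ((c*L - Tb)*L <= bN * L)%N.
  apply: leq_trans E; rewrite leq_mul2l leq_addl orbT //.
rewrite leq_mul2r; case/orP; lia.
Qed.
Lemma A3 c L p Tb bN : (c*L*(p+L) <= Tb*(p+L) + bN*L -> c*L <= bN + Tb ->
  c*L* p <= Tb* p + (bN + Tb - c*L)*L)%N.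
Proof.
move=> H1 H2. rewrite mulnBl mulnDl. rewrite !mulnDr in H1.
have : (c*L*L <= bN*L + Tb*L)%N by rewrite -mulnDl leq_mul2r H2 orbT.
lia.
Qed.

Theorem proposition5p6 (n : nat) (lam : nat -> nat) (a : nat -> nat) (d : nat)
    (an' : int) :
  (2 <= n)%N ->
  (forall i, (i < n)%N -> (0 < lam i)%N) ->
  min_gen n lam a d -> type4 n a d ->
  ((d%:R : rat) <= \sum_(i < n.-1) ((a i)%:R / (lam i)%:R)
                   + an'%:~R / (lam n.-1 + lcm_init n lam)%:R) ->
  (forall z : int,
     (d%:R : rat) <= \sum_(i < n.-1) ((a i)%:R / (lam i)%:R)
                     + z%:~R / (lam n.-1 + lcm_init n lam)%:R ->
     an' <= z) ->
  (an'%:~R : rat) = (a n.-1)%:R + (d * lcm_init n lam)%:R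
                    - \sum_(i < n.-1) ((lcm_init n lam)%:R / (lam i)%:R * (a i)%:R)
  /\ exists m : nat, an' = m%:Z /\
     (let a' := fun i => if i == n.-1 then m else a i in
      min_gen n (lam_shift n lam) a' d /\ type4 n a' d).
Proof.
case: n => [//|N] Hn Hlam0 [HinA HnzA HminA] [Hd [i0 [Hi0 Ha0]]] Han1 Han2.
rewrite /= in Hi0 Ha0 Han1 Han2 *.
have Hlam : forall i, (i < N)%N -> (0 < lam i)%N by move=> i Hi; apply: Hlam0; lia.
have Hp : (0 < lam N)%N by apply: Hlam0.
have HL := @L_gt0 N lam Hlam.
have F1 : forall b c, inM N.+1 lam b c <->
   (c * lcm_init N.+1 lam * lam N <=
     Ts N (lcm_init N.+1 lam) lam b * lam N + b N * lcm_init N.+1 lam)%N.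
  by move=> b c; apply: inM_iff.
have F2 : forall b c, inM N.+1 (lam_shift N.+1 lam) b c <->
   (c * lcm_init N.+1 lam * (lam N + lcm_init N.+1 lam) <=
     Ts N (lcm_init N.+1 lam) lam b * (lam N + lcm_init N.+1 lam)
      + b N * lcm_init N.+1 lam)%N.
  move=> b c; have := @inM_iff N (lam_shift N.+1 lam) lam b c.
  rewrite /lam_shift /= eqxx; apply.
  - by move=> i Hi; rewrite (ltn_eqF Hi).
  - exact: Hlam.
  - by rewrite addn_gt0 Hp.
have F3 : forall z : int, (d%:R : rat) <= \sum_(i < N) ((a i)%:R / (lam i)%:R) + z%:~R / (lam N + lcm_init N.+1 lam)%:R <->
   ((d * lcm_init N.+1 lam * (lam N + lcm_init N.+1 lam))%N%:Z <=
     (Ts N (lcm_init N.+1 lam) lam a * (lam N + lcm_init N.+1 lam))%N%:Z + z * (lcm_init N.+1 lam)%:Z).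
  move=> z; exact: (@core N lam a d z (lam N + lcm_init N.+1 lam) Hlam ltac:(by rewrite addn_gt0 Hp)).
have F4 : \sum_(i < N) ((lcm_init N.+1 lam)%:R / (lam i)%:R * (a i)%:R : rat) =
   (Ts N (lcm_init N.+1 lam) lam a)%:R.
  rewrite natr_sum; apply: eq_bigr => i _.
  have Hd' := @L_dvd N lam i (ltn_ord i).
  move: Hd'; set q := (_ %/ _)%N => Hd'.
  rewrite -(divnK Hd') -/q natrM natrM; field.
  by rewrite pnatr_eq0 -lt0n; apply: Hlam.
move: F1 F2 F3 F4 Han1 Han2 HL HminA HinA.
move: (lcm_init N.+1 lam) => L F1 F2 F3 F4 Han1 Han2 HL HminA HinA.
have Hdvd : forall i, (i < N)%N -> True by [].
have Hai0 : (0 < a i0)%N by move: Ha0; rewrite muln_gt0 => /andP[].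
have HaN : (0 < a N)%N by move: Ha0; rewrite muln_gt0 => /andP[].
have HA := (F1 a d).1 HinA.
have Hmin : (Ts N L lam a * lam N + (a N - 1) * L < d * L * lam N)%N.
  rewrite ltnNge; apply/negP => Hc.
  apply: (HminA (fun i => if i == N then (a N - 1)%N else a i) d
                (fun i => nat_of_bool (i == N)) 0%N).
  - apply/F1; rewrite eqxx.
    rewrite (@TsE N L lam _ a); first lia.
    by move=> i Hi; rewrite (ltn_eqF Hi).
  - by apply/F1; rewrite !mul0n.
  - right; lia.
  - by left; exists N; split => //; rewrite eqxx.
  - split; last by rewrite addn0.
    move=> i Hi; case: eqP => [->|] /=; lia.
have HT : (Ts N L lam a < d * L)%N.
  have : (Ts N L lam a * lam N < d * L * lam N)%N by nia.
  by rewrite ltn_pmul2r.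
have K1 : an' = (a N + d * L - Ts N L lam a)%N%:Z.
  have H1 := (F3 an').1 Han1.
  have H2 : an' <= (a N + d * L - Ts N L lam a)%N%:Z.
    apply: Han2; apply/F3. nia.
  nia.
have HK : ((a N + d * L - Ts N L lam a)%N%:R : rat) =
    (a N)%:R + (d * L)%:R - (Ts N L lam a)%:R.
  rewrite natrB ?natrD //; lia.
split; first by rewrite K1 F4; exact: HK.
set K := (a N + d * L - Ts N L lam a)%N.
exists K; split => //.
set a' := (fun i => if i == N then K else a i).
have Ha'N : a' N = K by rewrite /a' eqxx.
have Ha'i : forall i, i != N -> a' i = a i by move=> i Hi; rewrite /a' (negbTE Hi).
have Ta' : Ts N L lam a' = Ts N L lam a.
  by apply: TsE => i Hi; apply: Ha'i; rewrite (ltn_eqF Hi).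
split; last first.
  split => //; exists i0; split => //.
  rewrite Ha'N Ha'i ?(ltn_eqF Hi0) // muln_gt0 Hai0 /K; lia.
split.
- apply/F2; rewrite Ta' Ha'N /K; exact: A1.
- right; lia.
move=> b c e f Hb He Hnb Hne [Hab Hcd].
have Ta : Ts N L lam a = (Ts N L lam b + Ts N L lam e)%N.
  rewrite /Ts -big_split; apply: eq_bigr => i _.
  have := Hab i (ltn_trans (ltn_ord i) (ltnSn N)).
  rewrite Ha'i ?(ltn_eqF (ltn_ord i)) // => ->; by rewrite mulnDl.
have HbN : K = (b N + e N)%N by have := Hab N (ltnSn N); rewrite Ha'N.
have Hb' := (F2 b c).1 Hb.
have He' := (F2 e f).1 He.
have Cb : (c * L <= b N + Ts N L lam b)%N.
  case: (leqP (c * L) (Ts N L lam b)) => h; [lia | idtac]. apply: (@A2 c L (lam N)). exact: Hb'. exact: h. exact: HL.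
have Ce : (f * L <= e N + Ts N L lam e)%N.
  case: (leqP (f * L) (Ts N L lam e)) => h; [lia | idtac]. apply: (@A2 f L (lam N)). exact: He'. exact: h. exact: HL.
apply: (HminA (fun i => if i == N then (b N + Ts N L lam b - c * L)%N else b i) c
              (fun i => if i == N then (e N + Ts N L lam e - f * L)%N else e i) f).
- apply/F1; rewrite eqxx (@TsE N L lam _ b); first (apply: (@A3 c L (lam N)); [exact: Hb' | exact: Cb]).
  by move=> i Hi; rewrite (ltn_eqF Hi).
- apply/F1; rewrite eqxx (@TsE N L lam _ e); first (apply: (@A3 f L (lam N)); [exact: He' | exact: Ce]).
  by move=> i Hi; rewrite (ltn_eqF Hi).
- case: Hnb => [[i [Hi Hbi]] | Hc0]; last by right.
  case: (eqVneq i N) => [Ei|Ni].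
    subst i; case: (posnP c) => [c0 | cpos]; last by right; lia.
    by left; exists N; rewrite eqxx; split => //; lia.
  by left; exists i; rewrite (negbTE Ni).
- case: Hne => [[i [Hi Hbi]] | Hc0]; last by right.
  case: (eqVneq i N) => [Ei|Ni].
    subst i; case: (posnP f) => [c0 | cpos]; last by right; lia.
    by left; exists N; rewrite eqxx; split => //; lia.
  by left; exists i; rewrite (negbTE Ni).
- split => // i Hi; case: eqVneq => [->|Ni].
    rewrite /K in HbN; lia.
  by have := Hab i Hi; rewrite Ha'i.
Qed.
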